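(* Let $P,Q,R\in D_P$ be three points not lying on a common hyperbolic line, and let $m\in\mathbb{Z}_{\ge 0}$ be the number of ideal triangles circumscribing $\triangle PQR$. Let $h$ be the hyperbolic length of the perpendicular geodesic segment from $R$ to the hyperbolic line through $P$ and $Q$. Then $$m=\begin{cases}0 & \text{if } h<\Delta(P,Q),\\ 1 & \text{if } h=\Delta(P,Q),\\ 2 & \text{if } h>\Delta(P,Q).\end{cases}$$
   Context: $D_P=\{z\in\mathbb{C}:|z|<1\}$ is the Poincaré disk with metric $ds^2=4\frac{dx^2+dy^2}{(1-x^2-y^2)^2}$, and $S^1=\{|z|=1\}$ is its boundary at infinity. Hyperbolic lines are arcs of circles or diameters orthogonal to $S^1$. The hyperbolic distance is $d(P,Q)=\operatorname{arccosh}\left(1+\frac{2|P-Q|^2}{(1-|P|^2)(1-|Q|^2)}\right)$, and $\Delta(P,Q):=\log\frac{e^{d(P,Q)}+1}{e^{d(P,Q)}-1}=\log\coth\frac{d(P,Q)}{2}$. An ideal triangle circumscribing $\triangle PQR$ (a ''triangle inscribed in $S^1$ and circumscribing $\triangle PQR$'') is a triangle whose three vertices are distinct points of $S^1$ and whose sides are hyperbolic lines joining them, such that $P$, $Q$, $R$ lie on three distinct sides (one point on each side). *)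

(* Defs.v *)
From Stdlib Require Import Reals Lra.
Open Scope R_scope.

Definition pt := (R * R)%type.

Definition dot (u v : pt) : R := fst u * fst v + snd u * snd v.
Definition nrm2 (u : pt) : R := dot u u.
Definition psub (u v : pt) : pt := (fst u - fst v, snd u - snd v).
Definition det2 (u v : pt) : R := fst u * snd v - snd u * fst v.

Definition in_disk (z : pt) : Prop := nrm2 z < 1.
Definition on_S1 (z : pt) : Prop := nrm2 z = 1.

Definition arccosh (x : R) : R := ln (x + sqrt (x * x - 1)).

Definition hdist (P Q : pt) : R :=
  arccosh (1 + 2 * nrm2 (psub P Q) / ((1 - nrm2 P) * (1 - nrm2 Q))).

Definition hDelta (P Q : pt) : R :=
  ln ((exp (hdist P Q) + 1) / (exp (hdist P Q) - 1)).

(* Hyperbolic lines: either (the part inside D_P of) a Euclidean circle with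
   centre c and radius r orthogonal to S^1, or a diameter, i.e. the part
   inside D_P of a Euclidean line through the origin with direction w. *)
Inductive hline : Type :=
| HCirc (c : pt) (r : R)
| HDiam (w : pt).

Definition hl_ok (L : hline) : Prop :=
  match L with
  | HCirc c r => 0 < r /\ nrm2 c = 1 + r * r   (* orthogonal to S^1 *)
  | HDiam w => w <> (0, 0)
  end.

Definition hl_eq (L : hline) (z : pt) : Prop :=
  match L with
  | HCirc c r => nrm2 (psub z c) = r * r
  | HDiam w => det2 w z = 0
  end.

Definition on_hl (L : hline) (z : pt) : Prop := in_disk z /\ hl_eq L z.

Definition hl_end (L : hline) (u : pt) : Prop := on_S1 u /\ hl_eq L u.

Definition hl_normal (L : hline) (z : pt) : pt :=
  match L with
  | HCirc c _ => psub z c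
  | HDiam w => (- snd w, fst w)
  end.

(* L1 and L2 meet perpendicularly at z (the Poincare metric is conformal,
   so hyperbolic angles equal Euclidean angles). *)
Definition orth_at (L1 L2 : hline) (z : pt) : Prop :=
  on_hl L1 z /\ on_hl L2 z /\ dot (hl_normal L1 z) (hl_normal L2 z) = 0.

Definition on_side (u v z : pt) : Prop :=
  exists L, hl_ok L /\ hl_end L u /\ hl_end L v /\ on_hl L z.

(* The set of ideal triangles circumscribing triangle PQR; an ideal triangle
   is identified with its set of three (distinct, ideal) vertices. *)
Definition circumscribing (P Q R0 : pt) (T : pt -> Prop) : Prop :=
  exists a b c : pt,
    on_S1 a /\ on_S1 b /\ on_S1 c /\ a <> b /\ b <> c /\ c <> a /\
    T = (fun z => z = a \/ z = b \/ z = c) /\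
    on_side b c P /\ on_side c a Q /\ on_side a b R0.

Definition has_card {T : Type} (A : T -> Prop) (n : nat) : Prop :=
  exists f : nat -> T,
    (forall i j, (i < n)%nat -> (j < n)%nat -> f i = f j -> i = j) /\
    (forall x, A x <-> exists i, (i < n)%nat /\ f i = x).

(* Main.v *)
Require Import Defs.
From Stdlib Require Import Reals Lra Psatz FunctionalExtensionality PropExtensionality.
Open Scope R_scope.

Definition Jr (u : pt) : pt := (- snd u, fst u).
Definition gen (A : R) (c z : pt) : Prop := A * (nrm2 z + 1) = 2 * dot c z.
Definition nondeg (A : R) (c : pt) : Prop := A * A < nrm2 c.
Definition geo (u v z : pt) : Prop := gen (det2 u v) (Jr (psub u v)) z.

Definition gA (L : hline) : R := match L with HCirc _ _ => 1 | HDiam _ => 0 end.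
Definition gc (L : hline) : pt := match L with HCirc c _ => c | HDiam w => Jr w end.

Lemma pt_eq (u v : pt) : fst u = fst v -> snd u = snd v -> u = v.
Proof. destruct u, v; simpl; intros; subst; reflexivity. Qed.

Lemma pt_neq (u v : pt) : u <> v -> fst u <> fst v \/ snd u <> snd v.
Proof.
  intro H. destruct (Req_dec (fst u) (fst v)); [|now left].
  destruct (Req_dec (snd u) (snd v)); [|now right].
  exfalso; apply H, pt_eq; auto.
Qed.

Lemma gen_of_hl L : hl_ok L -> nondeg (gA L) (gc L) /\
  forall z, hl_eq L z <-> gen (gA L) (gc L) z.
Proof.
  destruct L as [c r | w]; simpl; unfold nondeg, gen, nrm2, dot, psub, det2, Jr; simpl.
  - intros [Hr Hc]. unfold nrm2, dot in Hc. split; [nra|].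
    intro z. split; intro H; nra.
  - intro Hw. split.
    + destruct w as [w1 w2]; simpl.
      destruct (Req_dec w1 0); destruct (Req_dec w2 0); subst; try (exfalso; apply Hw; reflexivity); nra.
    + intro z; split; intro; lra.
Qed.

Lemma hl_of_gen A c : nondeg A c ->
  exists L, hl_ok L /\ forall z, hl_eq L z <-> gen A c z.
Proof.
  unfold nondeg, gen, nrm2, dot. intro Hn.
  destruct (Req_dec A 0) as [HA|HA].
  - exists (HDiam (- snd c, fst c)). simpl. split.
    + intro E. injection E; intros. subst. destruct c; simpl in *. nra.
    + intro z. unfold det2; simpl. split; intro; nra.
  - set (c' := (fst c / A, snd c / A)).
    set (r := sqrt (nrm2 c' - 1)).
    assert (Hc' : nrm2 c' - 1 > 0).
    { unfold c', nrm2, dot; simpl.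
      replace ((fst c / A) * (fst c / A) + (snd c / A) * (snd c / A) - 1)
        with ((fst c * fst c + snd c * snd c - A * A) / (A * A)) by (field; auto).
      apply Rdiv_lt_0_compat; nra. }
    assert (Hr : r * r = nrm2 c' - 1) by (unfold r; apply sqrt_sqrt; lra).
    exists (HCirc c' r). simpl. split; [split; [unfold r; apply sqrt_lt_R0; lra| lra]|].
    + intro z. unfold gen.
      assert (Hd : dot c z = A * dot c' z).
      { unfold dot, c'; simpl. field. auto. }
      assert (Hn2 : nrm2 (psub z c') = nrm2 z - 2 * dot c' z + nrm2 c').
      { unfold nrm2, dot, psub; simpl. ring. }
      change (nrm2 (psub z c') = r * r <-> A * (nrm2 z + 1) = 2 * dot c z). rewrite Hn2, Hr, Hd. split; intro H.
      * assert (nrm2 z + 1 = 2 * dot c' z) by lra. rewrite H0. ring.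
      * assert (nrm2 z + 1 = 2 * dot c' z).
        { apply (Rmult_eq_reg_l A); auto. lra. }
        lra.
Qed.

Lemma lc1 (a b x y k : R) : x = y -> a - b = k * (x - y) -> a = b.
Proof. intros H1 H2. rewrite H1 in H2. lra. Qed.
Lemma lc2 (a b x y x' y' k k' : R) : x = y -> x' = y' ->
  a - b = k * (x - y) + k' * (x' - y') -> a = b.
Proof. intros H1 H2 H3. rewrite H1, H2 in H3. lra. Qed.

Definition nvec (A : R) (c z : pt) : pt := (A * fst z - fst c, A * snd z - snd c).

Lemma normal_gen L1 L2 z :
  dot (hl_normal L1 z) (hl_normal L2 z) = 0 <->
  dot (nvec (gA L1) (gc L1) z) (nvec (gA L2) (gc L2) z) = 0.
Proof.
  destruct L1, L2; unfold dot, nvec, hl_normal, psub, Jr; simpl; split; intro; lra.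
Qed.

Lemma sumsq0 a b : a * a + b * b = 0 -> a = 0 /\ b = 0.
Proof. intro H. split; nra. Qed.

Lemma unit_dot_det (u v : pt) : on_S1 u -> on_S1 v ->
  dot u v * dot u v + det2 u v * det2 u v = 1.
Proof.
  unfold on_S1, nrm2, dot, det2. destruct u as [u1 u2], v as [v1 v2]; simpl.
  intros Hu Hv. replace 1 with (1*1) by ring. rewrite <- Hu at 1. rewrite <- Hv. ring.
Qed.

Lemma S1_det0 (u v : pt) : on_S1 u -> on_S1 v -> u <> v -> det2 u v = 0 ->
  v = (- fst u, - snd u).
Proof.
  intros Hu Hv Hne Hd. pose proof (unit_dot_det u v Hu Hv) as Hdd.
  rewrite Hd in Hdd.
  assert (Hdot : dot u v = 1 \/ dot u v = -1).
  { assert ((dot u v - 1) * (dot u v + 1) = 0) by lra.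
    destruct (Rmult_integral _ _ H); [left|right]; lra. }
  unfold on_S1, nrm2, dot in *. destruct u as [u1 u2], v as [v1 v2]; simpl in *.
  destruct Hdot as [H1|H1].
  - exfalso. apply Hne.
    assert ((u1 - v1)*(u1-v1) + (u2-v2)*(u2-v2) = 0) by nra.
    apply sumsq0 in H. apply pt_eq; simpl; lra.
  - assert ((u1 + v1)*(u1+v1) + (u2+v2)*(u2+v2) = 0) by nra.
    apply sumsq0 in H. apply pt_eq; simpl; lra.
Qed.

Lemma S1_ne0 u : on_S1 u -> u <> (0,0).
Proof. unfold on_S1, nrm2, dot. intros H E. rewrite E in H. simpl in H. lra. Qed.

Lemma gen_boundary A c u v : nondeg A c -> on_S1 u -> on_S1 v -> u <> v ->
  gen A c u -> gen A c v -> forall z, gen A c z <-> geo u v z.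
Proof.
  intros Hn Hu Hv Hne Gu Gv z.
  assert (Cu : dot c u = A) by (unfold gen in Gu; rewrite Hu in Gu; lra).
  assert (Cv : dot c v = A) by (unfold gen in Gv; rewrite Hv in Gv; lra).
  destruct (Req_dec (det2 u v) 0) as [Hd|Hd].
  - pose proof (S1_det0 u v Hu Hv Hne Hd) as Ev. subst v.
    unfold geo, gen, nondeg, on_S1, nrm2, dot, det2, psub, Jr in *.
    destruct u as [u1 u2], c as [c1 c2], z as [z1 z2]; simpl in *.
    assert (HA : A = 0) by lra. subst A. rename HA into Cu. rewrite Cu in Hn |- *.
    set (lam := - c1 * u2 + c2 * u1).
    assert (E1 : c1 = lam * (- u2)).
    { unfold lam. apply (lc2 _ _ _ _ _ _ u1 (-c1) Cu Hu). ring. }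
    assert (E2 : c2 = lam * u1).
    { unfold lam. apply (lc2 _ _ _ _ _ _ u2 (-c2) Cu Hu). ring. }
    assert (Hl : lam <> 0).
    { intro Hl. rewrite Hl in E1, E2. rewrite E1, E2 in Hn. lra. }
    rewrite E1, E2. split; intro H.
    + assert (lam * (- u2 * z1 + u1 * z2) = 0) by lra.
      assert (- u2 * z1 + u1 * z2 = 0).
      { destruct (Rmult_integral _ _ H0); [contradiction|auto]. }
      nra.
    + nra.
  - assert (HJ1 : det2 u v * fst c = A * fst (Jr (psub u v))).
    { unfold dot, det2, Jr, psub in *. destruct u as [u1 u2], v as [v1 v2], c as [c1 c2]; simpl in *.
      apply (lc2 _ _ _ _ _ _ v2 (-u2) Cu Cv). ring. }
    assert (HJ2 : det2 u v * snd c = A * snd (Jr (psub u v))).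
    { unfold dot, det2, Jr, psub in *. destruct u as [u1 u2], v as [v1 v2], c as [c1 c2]; simpl in *.
      apply (lc2 _ _ _ _ _ _ (-v1) u1 Cu Cv). ring. }
    assert (HA : A <> 0).
    { intro HA. rewrite HA in HJ1, HJ2. unfold nondeg, nrm2, dot in Hn. rewrite HA in Hn.
      assert (fst c = 0). { apply (Rmult_eq_reg_l (det2 u v)); auto. lra. }
      assert (snd c = 0). { apply (Rmult_eq_reg_l (det2 u v)); auto. lra. }
      rewrite H, H0 in Hn. lra. }
    assert (Key : det2 u v * dot c z = A * dot (Jr (psub u v)) z).
    { unfold dot at 1 2.
      replace (det2 u v * (fst c * fst z + snd c * snd z)) with
        ((det2 u v * fst c) * fst z + (det2 u v * snd c) * snd z) by ring.
      rewrite HJ1, HJ2. ring. }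
    unfold geo, gen. split; intro H.
    + apply (Rmult_eq_reg_l A); auto.
      replace (A * (det2 u v * (nrm2 z + 1))) with (det2 u v * (A * (nrm2 z + 1))) by ring.
      rewrite H. replace (det2 u v * (2 * dot c z)) with (2 * (det2 u v * dot c z)) by ring.
      rewrite Key. ring.
    + apply (Rmult_eq_reg_l (det2 u v)); auto.
      replace (det2 u v * (A * (nrm2 z + 1))) with (A * (det2 u v * (nrm2 z + 1))) by ring.
      rewrite H. replace (A * (2 * dot (Jr (psub u v)) z)) with (2 * (A * dot (Jr (psub u v)) z)) by ring.
      rewrite <- Key. ring.
Qed.

Lemma S1_dot1 u v : on_S1 u -> on_S1 v -> dot u v = 1 -> u = v.
Proof.
  unfold on_S1, nrm2, dot. destruct u as [u1 u2], v as [v1 v2]; simpl. intros.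
  assert ((u1 - v1)*(u1-v1) + (u2-v2)*(u2-v2) = 0) by nra.
  apply sumsq0 in H2. apply pt_eq; simpl; lra.
Qed.

Lemma geo_nondeg u v : on_S1 u -> on_S1 v -> u <> v ->
  nondeg (det2 u v) (Jr (psub u v)).
Proof.
  intros Hu Hv Hne. pose proof (unit_dot_det u v Hu Hv) as H.
  assert (Hd : dot u v <> 1) by (intro E; apply Hne, S1_dot1; auto).
  assert (E : nrm2 (Jr (psub u v)) = 2 - 2 * dot u v).
  { unfold on_S1, nrm2, dot, Jr, psub in *. simpl. lra. }
  unfold nondeg. rewrite E.
  assert (0 < (1 - dot u v) * (1 - dot u v)).
  { assert (1 - dot u v <> 0) by lra. nra. }
  nra.
Qed.

Lemma geo_u u v : on_S1 u -> geo u v u.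
Proof. unfold geo, gen, on_S1, nrm2, dot, det2, Jr, psub. simpl. intro H. rewrite H. ring. Qed.

Lemma geo_v u v : on_S1 v -> geo u v v.
Proof. unfold geo, gen, on_S1, nrm2, dot, det2, Jr, psub. simpl. intro H. rewrite H. ring. Qed.

Lemma geo_sym u v z : geo u v z <-> geo v u z.
Proof. unfold geo, gen, nrm2, dot, det2, Jr, psub. simpl. split; intro; lra. Qed.

Lemma on_side_geo u v z : on_S1 u -> on_S1 v -> u <> v ->
  (on_side u v z <-> in_disk z /\ geo u v z).
Proof.
  intros Hu Hv Hne. split.
  - intros [L [HL [[_ Eu] [[_ Ev] [Hz Ez]]]]].
    destruct (gen_of_hl L HL) as [Hn Heq].
    split; auto.
    apply (gen_boundary (gA L) (gc L) u v Hn Hu Hv Hne); apply Heq; auto.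
  - intros [Hz G].
    destruct (hl_of_gen _ _ (geo_nondeg u v Hu Hv Hne)) as [L [HL Heq]].
    exists L. split; auto.
    split; [split; auto; apply Heq, geo_u; auto|].
    split; [split; auto; apply Heq, geo_v; auto|].
    split; auto. apply Heq; auto.
Qed.

Lemma sumsq_le0 a b : a * a + b * b <= 0 -> a = 0 /\ b = 0.
Proof.
  intro H. apply sumsq0. pose proof (Rle_0_sqr a). pose proof (Rle_0_sqr b).
  unfold Rsqr in *. lra.
Qed.

Lemma pt_dec (u v : pt) : u = v \/ u <> v.
Proof.
  destruct (Req_dec (fst u) (fst v)); [|right; intro E; subst; auto].
  destruct (Req_dec (snd u) (snd v)); [|right; intro E; subst; auto].
  left. apply pt_eq; auto.
Qed.

Definition tvec (w u : pt) : pt :=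
  ((1 + nrm2 w) * fst u - 2 * fst w, (1 + nrm2 w) * snd u - 2 * snd w).
Definition smu (w u : pt) : R := 2 * (1 + nrm2 w - 2 * dot u w) / nrm2 (tvec w u).
Definition sig (w u : pt) : pt :=
  (fst u - smu w u * fst (tvec w u), snd u - smu w u * snd (tvec w u)).

Lemma tvec_pos w u : in_disk w -> on_S1 u -> 0 < nrm2 (tvec w u).
Proof.
  unfold in_disk, on_S1, tvec, nrm2, dot. destruct w as [w1 w2], u as [u1 u2]; simpl.
  intros Hw Hu. set (k := 1 + (w1 * w1 + w2 * w2)).
  destruct (Rle_lt_dec (((k * u1 - 2 * w1) * (k * u1 - 2 * w1) +
          (k * u2 - 2 * w2) * (k * u2 - 2 * w2))) 0) as [H|H]; auto.
  exfalso.
  apply sumsq_le0 in H. destruct H as [E1 E2].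
  assert (k * k * (u1*u1+u2*u2) = 4 * (w1*w1+w2*w2)).
  { replace (k*k*(u1*u1+u2*u2)) with ((k*u1)*(k*u1) + (k*u2)*(k*u2)) by ring.
    replace (k*u1) with (2*w1) by lra. replace (k*u2) with (2*w2) by lra. ring. }
  rewrite Hu in H. unfold k in H. nra.
Qed.

Lemma kdot_pos w u : in_disk w -> on_S1 u -> 0 < 1 + nrm2 w - 2 * dot u w.
Proof.
  unfold in_disk, on_S1, nrm2, dot. destruct w as [w1 w2], u as [u1 u2]; simpl.
  intros Hw Hu.
  destruct (Rle_lt_dec (1 + (w1 * w1 + w2 * w2) - 2 * (u1 * w1 + u2 * w2)) 0) as [H|H]; auto.
  exfalso.
  assert (E : (u1 - w1) * (u1 - w1) + (u2 - w2) * (u2 - w2) <= 0) by nra.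
  apply sumsq_le0 in E. destruct E. assert (u1 = w1) by lra. assert (u2 = w2) by lra. subst. lra.
Qed.

Lemma nrm2_sub_scal u t m :
  nrm2 (fst u - m * fst t, snd u - m * snd t) = nrm2 u - 2 * m * dot u t + m * m * nrm2 t.
Proof. unfold nrm2, dot; simpl. ring. Qed.

Lemma dot_u_tvec w u : on_S1 u -> dot u (tvec w u) = 1 + nrm2 w - 2 * dot u w.
Proof. unfold on_S1. intro Hu. apply (lc1 _ _ _ _ (1 + nrm2 w) Hu).
  unfold tvec, nrm2, dot. simpl. ring. Qed.

Lemma smu_eq w u : in_disk w -> on_S1 u ->
  smu w u * nrm2 (tvec w u) = 2 * dot u (tvec w u).
Proof.
  intros Hw Hu. pose proof (tvec_pos w u Hw Hu). rewrite dot_u_tvec by auto.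
  unfold smu. field. lra.
Qed.

Lemma sig_S1 w u : in_disk w -> on_S1 u -> on_S1 (sig w u).
Proof.
  intros Hw Hu. unfold on_S1, sig. rewrite nrm2_sub_scal.
  replace (smu w u * smu w u * nrm2 (tvec w u)) with (smu w u * (smu w u * nrm2 (tvec w u))) by ring.
  rewrite smu_eq by auto. unfold on_S1 in Hu. rewrite Hu. ring.
Qed.

Lemma sig_geo w u : geo u (sig w u) w.
Proof.
  unfold geo, gen, sig, tvec, det2, Jr, psub, nrm2, dot. simpl. ring.
Qed.

Lemma sig_ne w u : in_disk w -> on_S1 u -> sig w u <> u.
Proof.
  intros Hw Hu E. pose proof (tvec_pos w u Hw Hu) as Ht.
  pose proof (kdot_pos w u Hw Hu) as Hk.
  assert (Hm : smu w u <> 0).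
  { unfold smu. apply Rmult_integral_contrapositive_currified; [lra|].
    apply Rinv_neq_0_compat; lra. }
  assert (fst (tvec w u) = 0 /\ snd (tvec w u) = 0) as [E1 E2].
  { assert (E1 : fst (sig w u) = fst u) by (rewrite E; auto).
    assert (E2 : snd (sig w u) = snd u) by (rewrite E; auto).
    unfold sig in E1, E2; simpl in E1, E2. split.
    - apply (Rmult_eq_reg_l (smu w u)); auto. rewrite Rmult_0_r. unfold tvec; simpl. lra.
    - apply (Rmult_eq_reg_l (smu w u)); auto. rewrite Rmult_0_r. unfold tvec; simpl. lra. }
  unfold nrm2, dot in Ht. rewrite E1, E2 in Ht. lra.
Qed.

Lemma geo_sig w u v : in_disk w -> on_S1 u -> on_S1 v -> u <> v -> geo u v w -> v = sig w u.
Proof.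
  intros Hw Hu Hv Hne G.
  pose proof (tvec_pos w u Hw Hu) as Ht.
  pose proof (smu_eq w u Hw Hu) as Hm.
  set (t := tvec w u) in *. set (x := psub v u).
  assert (Hdet : det2 t x = 0).
  { unfold geo, gen in G. unfold t, x, tvec, det2, psub, Jr, nrm2, dot in *. simpl in *. lra. }
  set (n := nrm2 t) in *. set (lam := dot t x / n).
  assert (Ex1 : fst x = lam * fst t).
  { unfold lam. apply (Rmult_eq_reg_l n); [|lra].
    replace (n * fst x) with (dot t x * fst t - snd t * det2 t x)
      by (unfold n, nrm2, dot, det2; ring).
    rewrite Hdet. field. lra. }
  assert (Ex2 : snd x = lam * snd t).
  { unfold lam. apply (Rmult_eq_reg_l n); [|lra].
    replace (n * snd x) with (dot t x * snd t + fst t * det2 t x)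
      by (unfold n, nrm2, dot, det2; ring).
    rewrite Hdet. field. lra. }
  assert (Ev : v = (fst u + fst x, snd u + snd x)).
  { unfold x, psub; simpl. apply pt_eq; simpl; ring. }
  assert (Hq : lam * (2 * dot u t + lam * n) = 0).
  { unfold on_S1 in Hu, Hv. rewrite Ev in Hv.
    replace (lam * (2 * dot u t + lam * n)) with (nrm2 (fst u + fst x, snd u + snd x) - nrm2 u).
    - rewrite Hu, Hv; ring.
    - unfold n, nrm2, dot. cbn [fst snd]. rewrite Ex1, Ex2. ring. }
  assert (Hl : lam <> 0).
  { intro Hl. apply Hne. rewrite Ev, Ex1, Ex2, Hl. apply pt_eq; simpl; ring. }
  assert (Hl2 : lam * n = - (smu w u * n)).
  { rewrite Hm. destruct (Rmult_integral _ _ Hq); [contradiction| lra]. }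
  assert (Hl3 : lam = - smu w u).
  { apply (Rmult_eq_reg_r n); [|lra]. lra. }
  rewrite Ev. unfold sig. fold t. apply pt_eq; cbn [fst snd]; rewrite ?Ex1, ?Ex2, Hl3; ring.
Qed.

Definition cpar (a : R) : pt := ((1 - a * a) / (1 + a * a), 2 * a / (1 + a * a)).
Definition mt (t : R) : R := ((1 - t) / (1 + t)) * ((1 - t) / (1 + t)).

Lemma one_sq_pos a : 1 + a * a <> 0.
Proof. nra. Qed.

Lemma cpar_S1 a : on_S1 (cpar a).
Proof. unfold on_S1, cpar, nrm2, dot; simpl. pose proof (one_sq_pos a). field. auto. Qed.

Lemma cpar_inv a : snd (cpar a) / (1 + fst (cpar a)) = a.
Proof. unfold cpar; simpl. pose proof (one_sq_pos a). field. split; auto.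
  replace (1 + a*a + (1 - a*a)) with 2 by ring. lra. Qed.

Lemma cpar_inj a b : cpar a = cpar b -> a = b.
Proof. intro E. rewrite <- (cpar_inv a), <- (cpar_inv b), E. reflexivity. Qed.

Lemma S1_cpar c : on_S1 c -> c <> (-1, 0) -> c = cpar (snd c / (1 + fst c)).
Proof.
  intros Hc Hne. unfold on_S1, nrm2, dot in Hc. destruct c as [c1 c2]; simpl in *.
  assert (H1 : 1 + c1 <> 0).
  { intro E. apply Hne. assert (c1 = -1) by lra. subst. assert (c2 * c2 = 0) by lra.
    assert (c2 = 0) by nra. subst. reflexivity. }
  set (a := c2 / (1 + c1)).
  assert (Ha : a * a * (1 + c1) = 1 - c1).
  { unfold a. replace (c2 / (1 + c1) * (c2 / (1 + c1)) * (1 + c1)) with (c2 * c2 / (1 + c1))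
      by (field; auto).
    replace (c2 * c2) with ((1 - c1) * (1 + c1)) by lra. field. auto. }
  assert (Hk : (1 + a * a) * (1 + c1) = 2) by lra.
  pose proof (one_sq_pos a).
  unfold cpar. apply pt_eq; simpl.
  - apply (Rmult_eq_reg_r (1 + a * a)); [|auto]. unfold Rdiv.
    rewrite Rmult_assoc, Rinv_l; auto. nra.
  - apply (Rmult_eq_reg_r (1 + a * a)); [|auto]. unfold Rdiv.
    rewrite Rmult_assoc, Rinv_l; auto. rewrite Rmult_1_r.
    apply (Rmult_eq_reg_r (1 + c1)); [|auto].
    replace (c2 * (1 + a * a) * (1 + c1)) with (2 * c2) by (rewrite Rmult_assoc, Hk; ring).
    unfold a. field. auto.
Qed.

Lemma sq_plus_pos_ne x y : y <> 0 -> x * x + y * y <> 0.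
Proof. intros. nra. Qed.

Lemma sig_cpar t a : -1 < t < 1 -> a <> 0 -> sig (t, 0) (cpar a) = cpar (- mt t / a).
Proof.
  intros Ht Ha.
  assert (Hsc : 1 + t <> 0 /\ a <> 0 /\
  (1 + t) * (1 + t) * a * ((1 + t) * (1 + t) * a) +
  - ((1 - t) * (1 - t)) * - ((1 - t) * (1 - t)) <> 0 /\
  1 + a * a <> 0 /\
  ((1 + t * t) * (1 - a * a) - 2 * t * (1 + a * a)) *
  ((1 + t * t) * (1 - a * a) - 2 * t * (1 + a * a)) +
  (1 + t * t) * (2 * a) * ((1 + t * t) * (2 * a)) <> 0).
  { repeat split; try lra; auto using one_sq_pos.
    - rewrite Rplus_comm. apply sq_plus_pos_ne. apply Rmult_integral_contrapositive_currified; [|auto].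
      nra.
    - apply sq_plus_pos_ne. apply Rmult_integral_contrapositive_currified; [|lra]. nra. }
  unfold sig, smu, tvec, cpar, mt in *. unfold nrm2, dot in *. simpl in *.
  apply pt_eq; simpl; field; auto.
Qed.

Lemma sig_m1 t : -1 < t < 1 -> sig (t, 0) (-1, 0) = (1, 0).
Proof.
  intros Ht. unfold sig, smu, tvec. unfold nrm2, dot. simpl.
  assert ((1 + t) * (1 + t) <> 0) by nra.
  apply pt_eq; simpl; field; nra.
Qed.

Lemma sig_p1 t : -1 < t < 1 -> sig (t, 0) (1, 0) = (-1, 0).
Proof.
  intros Ht. unfold sig, smu, tvec. unfold nrm2, dot. simpl.
  apply pt_eq; simpl; field; nra.
Qed.

Lemma geo_cpar_R al be s :
  geo (cpar al) (cpar be) (0, s) <->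
  (be - al) * ((1 + s * s) * (1 + al * be) - 2 * s * (al + be)) = 0.
Proof.
  pose proof (one_sq_pos al). pose proof (one_sq_pos be).
  assert (E : det2 (cpar al) (cpar be) * (nrm2 (0, s) + 1) -
              2 * dot (Jr (psub (cpar al) (cpar be))) (0, s) =
              2 * ((be - al) * ((1 + s * s) * (1 + al * be) - 2 * s * (al + be))) /
              ((1 + al * al) * (1 + be * be))).
  { unfold det2, cpar, Jr, psub, nrm2, dot. simpl. field. auto. }
  unfold geo, gen. split; intro HH.
  - assert (H1 : 2 * ((be - al) * ((1 + s * s) * (1 + al * be) - 2 * s * (al + be))) /
              ((1 + al * al) * (1 + be * be)) = 0) by lra.
    unfold Rdiv in H1. apply Rmult_integral in H1. destruct H1 as [H1|H1].
    + lra.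
    + exfalso. revert H1. apply Rinv_neq_0_compat. apply Rmult_integral_contrapositive_currified; auto.
  - rewrite HH in E. unfold Rdiv in E. rewrite Rmult_0_r, Rmult_0_l in E. lra.
Qed.

Definition circG (P Q R0 : pt) (X : pt -> Prop) : Prop :=
  exists a b c : pt,
    on_S1 a /\ on_S1 b /\ on_S1 c /\ a <> b /\ b <> c /\ c <> a /\
    X = (fun z => z = a \/ z = b \/ z = c) /\
    geo b c P /\ geo c a Q /\ geo a b R0.

Lemma circ_G P Q R0 X : in_disk P -> in_disk Q -> in_disk R0 ->
  (circumscribing P Q R0 X <-> circG P Q R0 X).
Proof.
  intros HP HQ HR. split.
  - intros [a [b [c [Ha [Hb [Hc [Hab [Hbc [Hca [HX [S1 [S2 S3]]]]]]]]]]]].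
    exists a, b, c. repeat (split; auto).
    + apply (on_side_geo b c P); auto.
    + apply (on_side_geo c a Q); auto.
    + apply (on_side_geo a b R0); auto.
  - intros [a [b [c [Ha [Hb [Hc [Hab [Hbc [Hca [HX [S1 [S2 S3]]]]]]]]]]]].
    exists a, b, c. repeat (split; auto).
    + apply (on_side_geo b c P); auto.
    + apply (on_side_geo c a Q); auto.
    + apply (on_side_geo a b R0); auto.
Qed.

Lemma mt_pos t : -1 < t < 1 -> 0 < mt t.
Proof. intro. unfold mt. assert (0 < (1 - t) / (1 + t)) by (apply Rdiv_lt_0_compat; lra). nra. Qed.

Lemma mt_inj p q : -1 < p < 1 -> -1 < q < 1 -> mt p = mt q -> p = q.
Proof.
  intros Hp Hq E. unfold mt in E.
  assert (0 < (1 - p) / (1 + p)) by (apply Rdiv_lt_0_compat; lra).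
  assert (0 < (1 - q) / (1 + q)) by (apply Rdiv_lt_0_compat; lra).
  assert (E2 : (1 - p) / (1 + p) = (1 - q) / (1 + q)).
  { destruct (Rtotal_order ((1 - p) / (1 + p)) ((1 - q) / (1 + q))) as [L|[L|L]]; auto; nra. }
  apply (Rmult_eq_compat_l ((1 + p) * (1 + q))) in E2.
  field_simplify in E2; try lra.
Qed.

Definition gpoly (p q s tau : R) : R :=
  (1 + s * s) * tau * tau + 2 * s * (mt p + mt q) * tau + (1 + s * s) * mt p * mt q.
Definition tri (p q tau : R) : pt -> Prop :=
  fun z => z = cpar (- mt q / tau) \/ z = cpar (- mt p / tau) \/ z = cpar tau.

Lemma gpoly_ne0 p q s tau : -1 < p < 1 -> -1 < q < 1 -> gpoly p q s tau = 0 -> tau <> 0.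
Proof.
  intros Hp Hq G E. subst. unfold gpoly in G.
  pose proof (mt_pos p Hp). pose proof (mt_pos q Hq).
  assert (0 < (1 + s * s) * mt p * mt q).
  { apply Rmult_lt_0_compat; auto. apply Rmult_lt_0_compat; auto. nra. }
  lra.
Qed.

Lemma gpoly_factor p q s tau : tau <> 0 ->
  gpoly p q s tau = tau * tau *
   ((1 + s * s) * (1 + (- mt q / tau) * (- mt p / tau)) - 2 * s * ((- mt q / tau) + (- mt p / tau))).
Proof. intro. unfold gpoly. field. auto. Qed.

Lemma norm_char p q s X : -1 < p < 1 -> -1 < q < 1 -> -1 < s < 1 -> p <> q ->
  (circG (p, 0) (q, 0) (0, s) X <-> exists tau, gpoly p q s tau = 0 /\ X = tri p q tau).
Proof.
  intros Hp Hq Hs Hpq.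
  assert (DP : in_disk (p, 0)) by (unfold in_disk, nrm2, dot; simpl; nra).
  assert (DQ : in_disk (q, 0)) by (unfold in_disk, nrm2, dot; simpl; nra).
  pose proof (mt_pos p Hp) as Mp. pose proof (mt_pos q Hq) as Mq.
  assert (Mpq : mt p <> mt q) by (intro E; apply Hpq, mt_inj; auto).
  split.
  - intros [a [b [c [Ha [Hb [Hc [Hab [Hbc [Hca [HX [G1 [G2 G3]]]]]]]]]]]].
    assert (Eb : b = sig (p, 0) c).
    { apply geo_sig; auto. apply geo_sym; auto. }
    assert (Ea : a = sig (q, 0) c).
    { apply geo_sig; auto. }
    destruct (pt_dec c (-1, 0)) as [Ec|Ec].
    { exfalso. apply Hab. rewrite Ea, Eb, Ec, !sig_m1; auto. }
    set (tau := snd c / (1 + fst c)).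
    assert (Ect : c = cpar tau) by (apply S1_cpar; auto).
    destruct (Req_dec tau 0) as [T0|T0].
    { exfalso. apply Hab. rewrite Ea, Eb, Ect, T0.
      replace (cpar 0) with (1, 0) by (unfold cpar; apply pt_eq; simpl; field).
      rewrite !sig_p1; auto. }
    rewrite Ect, sig_cpar in Ea, Eb by auto.
    exists tau. split.
    + rewrite Ea, Eb in G3. apply geo_cpar_R in G3.
      apply Rmult_integral in G3. destruct G3 as [G3|G3].
      * exfalso. apply Hab. rewrite Ea, Eb. f_equal.
        assert (- mt p / tau = - mt q / tau) by lra.
        exfalso. apply Mpq. apply (Rmult_eq_reg_r (- / tau)).
        -- unfold Rdiv in H. lra.
        -- apply Ropp_neq_0_compat, Rinv_neq_0_compat; auto.
      * rewrite gpoly_factor by auto. rewrite G3. ring.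
    + rewrite HX. unfold tri. rewrite <- Ea, <- Eb, <- Ect. reflexivity.
  - intros [tau [G HX]].
    pose proof (gpoly_ne0 p q s tau Hp Hq G) as T0.
    assert (Hm : forall m, 0 < m -> tau <> - m / tau).
    { intros m Hm E. assert (tau * tau = - m) by (rewrite E at 1; field; auto). nra. }
    exists (cpar (- mt q / tau)), (cpar (- mt p / tau)), (cpar tau).
    repeat split; try apply cpar_S1.
    + intro E. apply cpar_inj in E. apply Mpq.
      apply (Rmult_eq_reg_r (- / tau)).
      * unfold Rdiv in E. lra.
      * apply Ropp_neq_0_compat, Rinv_neq_0_compat; auto.
    + intro E. apply cpar_inj in E. apply (Hm (mt p)); auto.
    + intro E. apply cpar_inj in E. apply (Hm (mt q)); auto.
    + exact HX.
    + rewrite <- sig_cpar by auto. apply geo_sym, sig_geo.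
    + rewrite <- sig_cpar by auto. apply sig_geo.
    + apply geo_cpar_R. rewrite gpoly_factor in G by auto.
      apply Rmult_integral in G. destruct G as [G|G].
      * exfalso. apply Rmult_integral in G. destruct G; auto.
      * rewrite G. ring.
Qed.

Section Card.
Context {T : Type} (S : T -> Prop) (G : R -> Prop) (F : R -> T).
Hypothesis HS : forall X, S X <-> exists tau, G tau /\ X = F tau.

Lemma card0 : (forall tau, ~ G tau) -> has_card S 0.
Proof.
  intro H. exists (fun _ => F 0). split.
  - intros i j Hi. lia.
  - intro x. split.
    + intro Sx. apply HS in Sx. destruct Sx as [tau [Gt _]]. exfalso; apply (H tau); auto.
    + intros [i [Hi _]]. lia.
Qed.

Lemma card1 t0 : (forall tau, G tau <-> tau = t0) -> has_card S 1.
Proof.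
  intro H. exists (fun _ => F t0). split.
  - intros i j Hi Hj _. lia.
  - intro x. split.
    + intro Sx. apply HS in Sx. destruct Sx as [tau [Gt Ex]]. apply H in Gt. subst.
      exists 0%nat. split; auto.
    + intros [i [Hi Ex]]. apply HS. exists t0. split; auto. apply H; auto.
Qed.

Lemma card2 t1 t2 : (forall tau, G tau <-> tau = t1 \/ tau = t2) -> F t1 <> F t2 ->
  has_card S 2.
Proof.
  intros H Hne. exists (fun i => if Nat.eqb i 0 then F t1 else F t2). split.
  - intros i j Hi Hj E.
    destruct i as [|[|i]]; destruct j as [|[|j]]; simpl in E; try lia;
      exfalso; apply Hne; congruence.
  - intro x. split.
    + intro Sx. apply HS in Sx. destruct Sx as [tau [Gt Ex]]. apply H in Gt.
      destruct Gt; subst.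
      * exists 0%nat; split; auto.
      * exists 1%nat; split; auto.
    + intros [i [Hi Ex]]. apply HS.
      destruct (Nat.eqb i 0); [exists t1 | exists t2]; split; auto; apply H; auto.
Qed.
End Card.

Definition Dd (p q s : R) : R :=
  s * s * (mt p + mt q) * (mt p + mt q) - (1 + s * s) * (1 + s * s) * mt p * mt q.

Lemma gpoly_sq p q s tau : (1 + s * s) * gpoly p q s tau =
  ((1 + s * s) * tau + s * (mt p + mt q)) * ((1 + s * s) * tau + s * (mt p + mt q)) - Dd p q s.
Proof. unfold gpoly, Dd. ring. Qed.

Lemma roots_neg p q s : Dd p q s < 0 -> forall tau, gpoly p q s tau <> 0.
Proof.
  intros HD tau E. pose proof (gpoly_sq p q s tau). rewrite E in H.
  assert (0 <= ((1 + s * s) * tau + s * (mt p + mt q)) * ((1 + s * s) * tau + s * (mt p + mt q)))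
    by apply Rle_0_sqr. lra.
Qed.

Lemma roots_zero p q s : Dd p q s = 0 -> forall tau,
  gpoly p q s tau = 0 <-> tau = - (s * (mt p + mt q)) / (1 + s * s).
Proof.
  intros HD tau. pose proof (gpoly_sq p q s tau) as E. rewrite HD in E.
  pose proof (one_sq_pos s). split; intro H1.
  - rewrite H1, Rmult_0_r in E. assert (X : (1 + s * s) * tau + s * (mt p + mt q) = 0) by nra.
    apply (Rmult_eq_reg_l (1 + s * s)); auto. field_simplify; auto. lra.
  - apply (Rmult_eq_reg_l (1 + s * s)); auto. rewrite E, H1. field. auto.
Qed.

Lemma roots_pos p q s : 0 < Dd p q s -> forall tau,
  gpoly p q s tau = 0 <->
  tau = (- (s * (mt p + mt q)) + sqrt (Dd p q s)) / (1 + s * s) \/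
  tau = (- (s * (mt p + mt q)) - sqrt (Dd p q s)) / (1 + s * s).
Proof.
  intros HD tau. pose proof (gpoly_sq p q s tau) as E.
  pose proof (one_sq_pos s) as Hk.
  pose proof (sqrt_sqrt (Dd p q s) (Rlt_le _ _ HD)) as Hs.
  set (r := sqrt (Dd p q s)) in *.
  set (y := (1 + s * s) * tau + s * (mt p + mt q)) in *.
  assert (E2 : (1 + s * s) * gpoly p q s tau = (y - r) * (y + r)) by (rewrite E, <- Hs; ring).
  split; intro H1.
  - rewrite H1, Rmult_0_r in E2. symmetry in E2. apply Rmult_integral in E2.
    destruct E2 as [E2|E2]; [left|right]; apply (Rmult_eq_reg_l (1 + s * s)); auto;
      field_simplify; auto; unfold y in E2; lra.
  - apply (Rmult_eq_reg_l (1 + s * s)); auto. rewrite Rmult_0_r, E2.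
    destruct H1 as [H1|H1]; unfold y; rewrite H1; field_simplify; auto; lra.
Qed.

Lemma tri_inj p q s t1 t2 : -1 < p < 1 -> -1 < q < 1 ->
  gpoly p q s t1 = 0 -> gpoly p q s t2 = 0 -> tri p q t1 = tri p q t2 -> t1 = t2.
Proof.
  intros Hp Hq G1 G2 E.
  destruct (Req_dec t1 t2) as [|Hne]; auto. exfalso.
  pose proof (gpoly_ne0 _ _ _ _ Hp Hq G1) as N1.
  pose proof (mt_pos p Hp) as Mp. pose proof (mt_pos q Hq) as Mq.
  pose proof (one_sq_pos s) as Hk.
  assert (Hsum : (1 + s * s) * (t1 + t2) = - (2 * s * (mt p + mt q))).
  { assert ((t1 - t2) * ((1 + s * s) * (t1 + t2) + 2 * s * (mt p + mt q)) = 0).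
    { unfold gpoly in G1, G2. rewrite <- (Rminus_diag_eq _ _ (eq_trans G1 (eq_sym G2))). ring. }
    apply Rmult_integral in H. destruct H as [H|H]; lra. }
  assert (Hprod : t1 * t2 = mt p * mt q).
  { apply (Rmult_eq_reg_l (1 + s * s)); auto. unfold gpoly in G1.
    replace (2 * s * (mt p + mt q) * t1) with (- ((1 + s * s) * (t1 + t2)) * t1) in G1
      by (rewrite Hsum; ring).
    lra. }
  assert (M : tri p q t1 (cpar t2)) by (rewrite E; right; right; reflexivity).
  destruct M as [M|[M|M]]; apply cpar_inj in M.
  - assert (t1 * t2 = - mt q) by (rewrite M; field; auto). nra.
  - assert (t1 * t2 = - mt p) by (rewrite M; field; auto). nra.
  - lra.
Qed.

Lemma has_card_ext {T} (S1 S2 : T -> Prop) n : (forall x, S1 x <-> S2 x) ->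
  has_card S2 n -> has_card S1 n.
Proof.
  intros H [f [Hi Hm]]. exists f. split; auto. intro x. rewrite H. apply Hm.
Qed.

Lemma norm_count p q s : -1 < p < 1 -> -1 < q < 1 -> -1 < s < 1 -> p <> q ->
  (Dd p q s < 0 -> has_card (circG (p, 0) (q, 0) (0, s)) 0) /\
  (Dd p q s = 0 -> has_card (circG (p, 0) (q, 0) (0, s)) 1) /\
  (0 < Dd p q s -> has_card (circG (p, 0) (q, 0) (0, s)) 2).
Proof.
  intros Hp Hq Hs Hpq.
  pose proof (norm_char p q s) as HC.
  split; [|split]; intro HD.
  - apply (card0 _ (fun tau => gpoly p q s tau = 0) (tri p q) (fun X => HC X Hp Hq Hs Hpq)).
    + intros tau; apply roots_neg; auto.
  - apply (card1 _ (fun tau => gpoly p q s tau = 0) (tri p q) (fun X => HC X Hp Hq Hs Hpq)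
      (- (s * (mt p + mt q)) / (1 + s * s))).
    + intros tau; apply roots_zero; auto.
  - apply (card2 _ (fun tau => gpoly p q s tau = 0) (tri p q) (fun X => HC X Hp Hq Hs Hpq)
      ((- (s * (mt p + mt q)) + sqrt (Dd p q s)) / (1 + s * s))
      ((- (s * (mt p + mt q)) - sqrt (Dd p q s)) / (1 + s * s))).
    + intros tau; apply roots_pos; auto.
    + intro E. apply (tri_inj p q s) in E; auto.
      * pose proof (sqrt_lt_R0 _ HD). pose proof (one_sq_pos s).
        assert (0 < 1 + s * s) by nra.
        apply (Rmult_eq_compat_r (1 + s * s)) in E. field_simplify in E; lra.
      * apply roots_pos; auto.
      * apply roots_pos; auto.
Qed.

Lemma arccosh_t t : 0 <= t < 1 ->
  arccosh ((1 + t * t) / (1 - t * t)) = ln ((1 + t) / (1 - t)).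
Proof.
  intro Ht. unfold arccosh. f_equal.
  assert (1 - t * t > 0) by nra.
  replace ((1 + t * t) / (1 - t * t) * ((1 + t * t) / (1 - t * t)) - 1)
    with ((2 * t / (1 - t * t)) * (2 * t / (1 - t * t))) by (field; lra).
  rewrite sqrt_square.
  - field. split; lra.
  - apply Rmult_le_pos; [lra|]. left; apply Rinv_0_lt_compat; lra.
Qed.

Lemma hdist_R s : -1 < s < 1 -> hdist (0, s) (0, 0) = ln ((1 + Rabs s) / (1 - Rabs s)).
Proof.
  intro Hs. unfold hdist. rewrite <- arccosh_t.
  - f_equal. unfold nrm2, psub, dot; simpl.
    replace (Rabs s * Rabs s) with (s * s) by (rewrite <- Rabs_mult; rewrite Rabs_right; nra).
    field; repeat split; nra.
  - split; [apply Rabs_pos|]. apply Rabs_def1; lra.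
Qed.

Lemma hdist_PQ p q : -1 < p < 1 -> -1 < q < 1 ->
  hdist (p, 0) (q, 0) = ln ((1 + Rabs (p - q) / (1 - p * q)) / (1 - Rabs (p - q) / (1 - p * q))).
Proof.
  intros Hp Hq. unfold hdist. rewrite <- arccosh_t.
  - f_equal. unfold nrm2, psub, dot; simpl.
    assert (1 - p * q > 0) by nra.
    replace (Rabs (p - q) / (1 - p * q) * (Rabs (p - q) / (1 - p * q)))
      with ((p - q) * (p - q) / ((1 - p * q) * (1 - p * q))).
    + field. split; [|split]; try nra.
      replace ((1 - p * q) * (1 - p * q) - (p - q) * (p - q)) with ((1 - p * p) * (1 - q * q)) by ring.
      apply Rgt_not_eq. apply Rmult_gt_0_compat; nra.
    + assert (Ea : Rabs (p - q) * Rabs (p - q) = (p - q) * (p - q))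
        by (rewrite <- Rabs_mult; apply Rabs_right; apply Rle_ge, Rle_0_sqr).
      rewrite <- Ea. field. lra.
  - assert (1 - p * q > 0) by nra. split.
    + apply Rmult_le_pos; [apply Rabs_pos| left; apply Rinv_0_lt_compat; lra].
    + apply (Rmult_lt_reg_r (1 - p * q)); [lra|]. unfold Rdiv.
      rewrite Rmult_assoc, Rinv_l, Rmult_1_r, Rmult_1_l by lra.
      apply Rabs_def1; nra.
Qed.

Lemma hDelta_PQ p q : -1 < p < 1 -> -1 < q < 1 -> p <> q ->
  hDelta (p, 0) (q, 0) = ln ((1 - p * q) / Rabs (p - q)).
Proof.
  intros Hp Hq Hpq. unfold hDelta. rewrite hdist_PQ by auto.
  assert (Hpq1 : 1 - p * q > 0) by nra.
  assert (Ha : 0 < Rabs (p - q)) by (apply Rabs_pos_lt; lra).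
  assert (Hlt : Rabs (p - q) < 1 - p * q) by (apply Rabs_def1; nra).
  set (t := Rabs (p - q) / (1 - p * q)).
  assert (Ht : 0 < t < 1).
  { unfold t. split; [apply Rdiv_lt_0_compat; lra|].
    apply (Rmult_lt_reg_r (1 - p * q)); [lra|]. unfold Rdiv.
    rewrite Rmult_assoc, Rinv_l, Rmult_1_r, Rmult_1_l by lra. lra. }
  rewrite exp_ln by (apply Rdiv_lt_0_compat; lra).
  f_equal. unfold t. field. repeat split; lra.
Qed.

Lemma Dd_sign p q s : -1 < p < 1 -> -1 < q < 1 -> -1 < s < 1 -> p <> q ->
  exists K, 0 < K /\
  Dd p q s = K * ((1 + Rabs s) * Rabs (p - q) - (1 - Rabs s) * (1 - p * q)).
Proof.
  intros Hp Hq Hs Hpq.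
  set (sg := Rabs s).
  assert (Hsg : s * s = sg * sg) by (unfold sg; rewrite <- Rabs_mult; rewrite Rabs_right; [auto| apply Rle_ge, Rle_0_sqr]).
  assert (Hsg0 : 0 <= sg) by apply Rabs_pos.
  assert (Hsg1 : sg < 1) by (apply Rabs_def1; lra).
  set (x := (1 - p) / (1 + p)). set (y := (1 - q) / (1 + q)).
  assert (Hx : 0 < x) by (apply Rdiv_lt_0_compat; lra).
  assert (Hy : 0 < y) by (apply Rdiv_lt_0_compat; lra).
  assert (Hxy : x - y = 2 * (q - p) / ((1 + p) * (1 + q))) by (unfold x, y; field; lra).
  assert (Hd : 0 < (1 + p) * (1 + q)) by nra.
  set (F2 := sg * (x * x + y * y) + (1 + sg * sg) * x * y).
  assert (HF2 : 0 < F2).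
  { unfold F2. assert (0 < (1 + sg * sg) * x * y).
    { apply Rmult_lt_0_compat; [|lra]. apply Rmult_lt_0_compat; nra. }
    assert (0 <= sg * (x * x + y * y)) by (apply Rmult_le_pos; nra). lra. }
  destruct (Rtotal_order p q) as [Lt|[Eq|Gt]]; [| contradiction |].
  -
    assert (Hxy' : y < x).
    { assert (0 < 2 * (q - p) / ((1 + p) * (1 + q))) by (apply Rdiv_lt_0_compat; lra). lra. }
    exists ((x - sg * y) * F2 / ((1 + p) * (1 + q))). split.
    + apply Rdiv_lt_0_compat; auto. apply Rmult_lt_0_compat; auto. nra.
    + rewrite Rabs_left by lra. fold sg.
      unfold Dd, mt. fold x y. rewrite Hsg. unfold F2, x, y. field. lra.
  - assert (Hxy' : x < y).
    { assert (0 < 2 * (p - q) / ((1 + p) * (1 + q))) by (apply Rdiv_lt_0_compat; lra).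
      assert (x - y = - (2 * (p - q) / ((1 + p) * (1 + q)))) by (rewrite Hxy; field; lra). lra. }
    exists ((y - sg * x) * F2 / ((1 + p) * (1 + q))). split.
    + apply Rdiv_lt_0_compat; auto. apply Rmult_lt_0_compat; auto. nra.
    + rewrite Rabs_right by lra. fold sg.
      unfold Dd, mt. fold x y. rewrite Hsg. unfold F2, x, y. field. lra.
Qed.

Lemma norm_main p q s h : -1 < p < 1 -> -1 < q < 1 -> -1 < s < 1 -> p <> q ->
  h = hdist (0, s) (0, 0) ->
  (h < hDelta (p, 0) (q, 0) -> has_card (circumscribing (p, 0) (q, 0) (0, s)) 0) /\
  (h = hDelta (p, 0) (q, 0) -> has_card (circumscribing (p, 0) (q, 0) (0, s)) 1) /\
  (hDelta (p, 0) (q, 0) < h -> has_card (circumscribing (p, 0) (q, 0) (0, s)) 2).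
Proof.
  intros Hp Hq Hs Hpq Hh.
  assert (DP : in_disk (p, 0)) by (unfold in_disk, nrm2, dot; simpl; nra).
  assert (DQ : in_disk (q, 0)) by (unfold in_disk, nrm2, dot; simpl; nra).
  assert (DR : in_disk (0, s)) by (unfold in_disk, nrm2, dot; simpl; nra).
  assert (Hext : forall X, circumscribing (p, 0) (q, 0) (0, s) X <-> circG (p, 0) (q, 0) (0, s) X)
    by (intro; apply circ_G; auto).
  destruct (norm_count p q s Hp Hq Hs Hpq) as [C0 [C1 C2]].
  destruct (Dd_sign p q s Hp Hq Hs Hpq) as [K [HK HD]].
  rewrite hdist_R in Hh by auto. rewrite hDelta_PQ by auto.
  set (sg := Rabs s) in *.
  assert (Hsg0 : 0 <= sg) by apply Rabs_pos.
  assert (Hsg1 : sg < 1) by (apply Rabs_def1; lra).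
  assert (Hpq1 : 1 - p * q > 0) by nra.
  assert (Ha : 0 < Rabs (p - q)) by (apply Rabs_pos_lt; lra).
  set (a := Rabs (p - q)) in *.
  assert (HA : 0 < (1 + sg) / (1 - sg)) by (apply Rdiv_lt_0_compat; lra).
  assert (HB : 0 < (1 - p * q) / a) by (apply Rdiv_lt_0_compat; lra).
  assert (Key : (1 + sg) / (1 - sg) - (1 - p * q) / a =
                ((1 + sg) * a - (1 - sg) * (1 - p * q)) / ((1 - sg) * a))
    by (field; lra).
  assert (Hden : 0 < (1 - sg) * a) by nra.
  split; [|split]; intro H; rewrite Hh in H; apply (has_card_ext _ _ _ Hext).
  - apply C0. apply ln_lt_inv in H; auto.
    assert (((1 + sg) * a - (1 - sg) * (1 - p * q)) / ((1 - sg) * a) < 0) by lra.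
    assert ((1 + sg) * a - (1 - sg) * (1 - p * q) < 0).
    { destruct (Rle_lt_dec 0 ((1 + sg) * a - (1 - sg) * (1 - p * q))); auto.
      assert (0 <= ((1 + sg) * a - (1 - sg) * (1 - p * q)) / ((1 - sg) * a)).
      { apply Rmult_le_pos; auto. left; apply Rinv_0_lt_compat; auto. } lra. }
    rewrite HD. nra.
  - apply C1. apply ln_inv in H; auto.
    assert (((1 + sg) * a - (1 - sg) * (1 - p * q)) / ((1 - sg) * a) = 0) by lra.
    assert ((1 + sg) * a - (1 - sg) * (1 - p * q) = 0).
    { unfold Rdiv in H0. apply Rmult_integral in H0. destruct H0; auto.
      exfalso. revert H0. apply Rinv_neq_0_compat. lra. }
    rewrite HD, H1. ring.
  - apply C2. apply ln_lt_inv in H; auto.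
    assert (0 < ((1 + sg) * a - (1 - sg) * (1 - p * q)) / ((1 - sg) * a)) by lra.
    assert (0 < (1 + sg) * a - (1 - sg) * (1 - p * q)).
    { destruct (Rle_lt_dec ((1 + sg) * a - (1 - sg) * (1 - p * q)) 0); auto.
      assert (((1 + sg) * a - (1 - sg) * (1 - p * q)) / ((1 - sg) * a) <= 0).
      { unfold Rdiv. assert (0 < / ((1 - sg) * a)) by (apply Rinv_0_lt_compat; auto). nra. } lra. }
    rewrite HD. nra.
Qed.

Definition cmul (x y : pt) : pt :=
  (fst x * fst y - snd x * snd y, fst x * snd y + snd x * fst y).
Definition cconj (x : pt) : pt := (fst x, - snd x).
Definition den (a z : pt) : pt := (1 - dot a z, - det2 a z).
Definition phi (a z : pt) : pt :=
  cmul (psub z a) (fst (den a z) / nrm2 (den a z), - snd (den a z) / nrm2 (den a z)).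
Definition genA (a : pt) (A : R) (c : pt) : R := A * (1 + nrm2 a) - 2 * dot a c.
Definition genC (a : pt) (A : R) (c : pt) : pt :=
  (fst c + fst (cmul (cconj c) (cmul a a)) - 2 * A * fst a,
   snd c + snd (cmul (cconj c) (cmul a a)) - 2 * A * snd a).

Lemma den_pos a z : in_disk a -> nrm2 z <= 1 -> 0 < nrm2 (den a z).
Proof.
  unfold in_disk, den, nrm2, dot, det2. destruct a as [a1 a2], z as [z1 z2]; simpl. intros Ha Hz.
  destruct (Rle_lt_dec ((1 - (a1 * z1 + a2 * z2)) * (1 - (a1 * z1 + a2 * z2)) +
     - (a1 * z2 - a2 * z1) * - (a1 * z2 - a2 * z1)) 0) as [H|H]; auto.
  exfalso. apply sumsq_le0 in H. destruct H as [H1 H2].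
  assert (E : (a1 * z1 + a2 * z2) * (a1 * z1 + a2 * z2) + (a1 * z2 - a2 * z1) * (a1 * z2 - a2 * z1)
     = (a1 * a1 + a2 * a2) * (z1 * z1 + z2 * z2)) by ring.
  assert (a1 * z1 + a2 * z2 = 1) by lra.
  assert (a1 * z2 - a2 * z1 = 0) by lra.
  rewrite H, H0 in E.
  assert (0 <= a1 * a1 + a2 * a2) by nra.
  nra.
Qed.

Lemma phi_nrm a z : in_disk a -> nrm2 z <= 1 ->
  1 - nrm2 (phi a z) = (1 - nrm2 a) * (1 - nrm2 z) / nrm2 (den a z).
Proof.
  intros Ha Hz. pose proof (den_pos a z Ha Hz) as Hd.
  unfold phi, cmul, psub, den in *.
  unfold nrm2, dot, det2 in *. destruct a as [a1 a2], z as [z1 z2]; simpl in *.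
  field. lra.
Qed.

Lemma phi_dist a z w : in_disk a -> nrm2 z <= 1 -> nrm2 w <= 1 ->
  nrm2 (psub (phi a z) (phi a w)) =
  (1 - nrm2 a) * (1 - nrm2 a) * nrm2 (psub z w) / (nrm2 (den a z) * nrm2 (den a w)).
Proof.
  intros Ha Hz Hw. pose proof (den_pos a z Ha Hz) as Hd1. pose proof (den_pos a w Ha Hw) as Hd2.
  unfold phi, cmul, psub, den in *.
  unfold nrm2, dot, det2 in *. destruct a as [a1 a2], z as [z1 z2], w as [w1 w2]; simpl in *.
  field. lra.
Qed.

Lemma phi_gen_id a A c z : in_disk a -> nrm2 z <= 1 ->
  genA a A c * (nrm2 (phi a z) + 1) - 2 * dot (genC a A c) (phi a z) =
  (1 - nrm2 a) * (1 - nrm2 a) / nrm2 (den a z) * (A * (nrm2 z + 1) - 2 * dot c z).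
Proof.
  intros Ha Hz. pose proof (den_pos a z Ha Hz) as Hd1.
  unfold genA, genC, phi, cmul, cconj, psub, den in *.
  unfold nrm2, dot, det2 in *. destruct a as [a1 a2], z as [z1 z2], c as [c1 c2]; simpl in *.
  field. lra.
Qed.

Lemma phi_nondeg_id a A c :
  nrm2 (genC a A c) - genA a A c * genA a A c =
  (1 - nrm2 a) * (1 - nrm2 a) * (nrm2 c - A * A).
Proof.
  unfold genA, genC, cmul, cconj. unfold nrm2, dot.
  destruct a as [a1 a2], c as [c1 c2]; simpl. ring.
Qed.

Lemma phi_nondeg a A c : in_disk a -> nondeg A c -> nondeg (genA a A c) (genC a A c).
Proof.
  unfold nondeg, in_disk. intros Ha H. pose proof (phi_nondeg_id a A c).
  assert (0 < (1 - nrm2 a) * (1 - nrm2 a) * (nrm2 c - A * A)).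
  { apply Rmult_lt_0_compat; [|lra]. nra. }
  lra.
Qed.

Lemma phi_gen a A c z : in_disk a -> nrm2 z <= 1 ->
  (gen A c z <-> gen (genA a A c) (genC a A c) (phi a z)).
Proof.
  intros Ha Hz. pose proof (phi_gen_id a A c z Ha Hz) as E.
  pose proof (den_pos a z Ha Hz) as Hd.
  assert (Hk : 0 < (1 - nrm2 a) * (1 - nrm2 a) / nrm2 (den a z)).
  { unfold in_disk in Ha. apply Rdiv_lt_0_compat; nra. }
  unfold gen. split; intro H.
  - rewrite H in E. replace (2 * dot c z - 2 * dot c z) with 0 in E by ring.
    rewrite Rmult_0_r in E. lra.
  - assert (X : (1 - nrm2 a) * (1 - nrm2 a) / nrm2 (den a z) * (A * (nrm2 z + 1) - 2 * dot c z) = 0) by lra.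
    apply Rmult_integral in X. destruct X; lra.
Qed.

Lemma phi_aa a : phi a a = (0, 0).
Proof. unfold phi, cmul, psub. apply pt_eq; simpl; ring. Qed.

Lemma phi_inv a z : in_disk a -> nrm2 z <= 1 -> phi (- fst a, - snd a) (phi a z) = z.
Proof.
  intros Ha Hz. pose proof (den_pos a z Ha Hz) as Hd.
  assert (Hz' : nrm2 (phi a z) <= 1).
  { pose proof (phi_nrm a z Ha Hz). unfold in_disk in Ha.
    assert (0 <= (1 - nrm2 a) * (1 - nrm2 z) / nrm2 (den a z)).
    { apply Rmult_le_pos; [apply Rmult_le_pos; lra| left; apply Rinv_0_lt_compat; auto]. }
    lra. }
  assert (Ha' : in_disk (- fst a, - snd a)) by (unfold in_disk, nrm2, dot in *; simpl; lra).
  pose proof (den_pos _ _ Ha' Hz') as Hd'.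
  unfold phi in *. unfold cmul, psub, den in *.
  unfold nrm2, dot, det2 in *. destruct a as [a1 a2], z as [z1 z2]; simpl in *.
  unfold in_disk, nrm2, dot in Ha; simpl in Ha.
  assert (Hk : 0 < (1 - (a1 * a1 + a2 * a2)) * (1 - (a1 * a1 + a2 * a2))) by nra.
  apply pt_eq; simpl; field; (split; [lra|]);
  match goal with |- ?X <> 0 =>
    replace X with (((1 - (a1 * z1 + a2 * z2)) * (1 - (a1 * z1 + a2 * z2)) +
     - (a1 * z2 - a2 * z1) * - (a1 * z2 - a2 * z1)) * ((1 - (a1 * a1 + a2 * a2)) * (1 - (a1 * a1 + a2 * a2)))) by ring
  end; apply Rgt_not_eq, Rmult_lt_0_compat; lra.
Qed.

Lemma genC_at a A c : gen A c a ->
  genC a A c = (- (1 - nrm2 a) * fst (nvec A c a), - (1 - nrm2 a) * snd (nvec A c a)).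
Proof.
  unfold gen. intro H. apply pt_eq.
  - apply (lc1 _ _ _ _ (- fst a) H). unfold genC, nvec, cmul, cconj, nrm2, dot. simpl. ring.
  - apply (lc1 _ _ _ _ (- snd a) H). unfold genC, nvec, cmul, cconj, nrm2, dot. simpl. ring.
Qed.

Lemma genA_at a A c : gen A c a -> genA a A c = 0.
Proof. unfold gen, genA. intro H. rewrite Rplus_comm. unfold dot in *. destruct a, c; simpl in *. lra. Qed.

Definition rot (e z : pt) : pt := (dot e z, det2 e z).

Lemma rot_nrm e z : on_S1 e -> nrm2 (rot e z) = nrm2 z.
Proof.
  unfold on_S1. intro He. apply (lc1 _ _ _ _ (nrm2 z) He).
  unfold rot, nrm2, dot, det2. simpl. ring.
Qed.

Lemma rot_dot e c z : on_S1 e -> dot (rot e c) (rot e z) = dot c z.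
Proof.
  unfold on_S1. intro He. apply (lc1 _ _ _ _ (dot c z) He).
  unfold rot, nrm2, dot, det2. simpl. ring.
Qed.

Lemma rot_psub e z w : psub (rot e z) (rot e w) = rot e (psub z w).
Proof. unfold rot, psub, dot, det2. apply pt_eq; simpl; ring. Qed.

Lemma rot_inv e z : on_S1 e -> rot (cconj e) (rot e z) = z.
Proof.
  unfold on_S1. intro He. apply pt_eq.
  - apply (lc1 _ _ _ _ (fst z) He). unfold rot, cconj, nrm2, dot, det2. simpl. ring.
  - apply (lc1 _ _ _ _ (snd z) He). unfold rot, cconj, nrm2, dot, det2. simpl. ring.
Qed.

Lemma cconj_S1 e : on_S1 e -> on_S1 (cconj e).
Proof. unfold on_S1, cconj, nrm2, dot. simpl. intro. lra. Qed.

Lemma cconj_inv e : cconj (cconj e) = e.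
Proof. unfold cconj. apply pt_eq; simpl; ring. Qed.

Record good (f : pt -> pt) : Prop := {
  g_nrm : forall z, nrm2 z <= 1 -> exists k, 0 < k /\ 1 - nrm2 (f z) = k * (1 - nrm2 z);
  g_gen : forall A c, nondeg A c -> exists A' c', nondeg A' c' /\
            forall z, nrm2 z <= 1 -> (gen A c z <-> gen A' c' (f z));
  g_dist : forall z w, in_disk z -> in_disk w -> hdist (f z) (f w) = hdist z w }.

Lemma good_closed f z : good f -> nrm2 z <= 1 -> nrm2 (f z) <= 1.
Proof.
  intros Hf Hz. destruct (g_nrm f Hf z Hz) as [k [Hk E]].
  assert (0 <= k * (1 - nrm2 z)) by (apply Rmult_le_pos; lra). lra.
Qed.

Lemma good_disk f z : good f -> nrm2 z <= 1 -> (in_disk (f z) <-> in_disk z).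
Proof.
  intros Hf Hz. destruct (g_nrm f Hf z Hz) as [k [Hk E]]. unfold in_disk.
  split; intro H; nra.
Qed.

Lemma good_S1 f z : good f -> nrm2 z <= 1 -> (on_S1 (f z) <-> on_S1 z).
Proof.
  intros Hf Hz. destruct (g_nrm f Hf z Hz) as [k [Hk E]]. unfold on_S1.
  split; intro H.
  - rewrite H in E. assert (k * (1 - nrm2 z) = 0) by lra.
    apply Rmult_integral in H0. destruct H0; lra.
  - rewrite H in E. lra.
Qed.

Lemma good_comp f g : good f -> good g -> good (fun z => g (f z)).
Proof.
  intros Hf Hg. split.
  - intros z Hz. destruct (g_nrm f Hf z Hz) as [k1 [Hk1 E1]].
    destruct (g_nrm g Hg (f z) (good_closed f z Hf Hz)) as [k2 [Hk2 E2]].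
    exists (k2 * k1). split; [apply Rmult_lt_0_compat; auto|]. rewrite E2, E1. ring.
  - intros A c Hn. destruct (g_gen f Hf A c Hn) as [A1 [c1 [Hn1 H1]]].
    destruct (g_gen g Hg A1 c1 Hn1) as [A2 [c2 [Hn2 H2]]].
    exists A2, c2. split; auto. intros z Hz. rewrite H1 by auto. apply H2.
    apply good_closed; auto.
  - intros z w Hz Hw. rewrite (g_dist g Hg).
    + apply g_dist; auto.
    + apply good_disk; auto. unfold in_disk in Hz; lra.
    + apply good_disk; auto. unfold in_disk in Hw; lra.
Qed.

Lemma rot_good e : on_S1 e -> good (rot e).
Proof.
  intro He. split.
  - intros z Hz. exists 1. split; [lra|]. rewrite rot_nrm; auto. ring.
  - intros A c Hn. exists A, (rot e c). split.
    + unfold nondeg in *. rewrite rot_nrm; auto.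
    + intros z Hz. unfold gen. rewrite rot_nrm, rot_dot; auto. tauto.
  - intros z w Hz Hw. unfold hdist. rewrite rot_psub, !rot_nrm; auto.
Qed.

Lemma phi_hdist a z w : in_disk a -> in_disk z -> in_disk w ->
  hdist (phi a z) (phi a w) = hdist z w.
Proof.
  intros Ha Hz Hw. unfold hdist. f_equal.
  assert (Hz1 : nrm2 z <= 1) by (unfold in_disk in Hz; lra).
  assert (Hw1 : nrm2 w <= 1) by (unfold in_disk in Hw; lra).
  pose proof (phi_nrm a z Ha Hz1) as E1. pose proof (phi_nrm a w Ha Hw1) as E2.
  rewrite (phi_dist a z w Ha Hz1 Hw1), E1, E2.
  pose proof (den_pos a z Ha Hz1). pose proof (den_pos a w Ha Hw1).
  unfold in_disk in *. field. repeat split; lra.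
Qed.

Lemma phi_good a : in_disk a -> good (phi a).
Proof.
  intro Ha. split.
  - intros z Hz. exists ((1 - nrm2 a) / nrm2 (den a z)). split.
    + unfold in_disk in Ha. apply Rdiv_lt_0_compat; [lra| apply den_pos; auto].
    + rewrite phi_nrm by auto. unfold Rdiv. ring.
  - intros A c Hn. exists (genA a A c), (genC a A c). split.
    + apply phi_nondeg; auto.
    + intros z Hz. apply phi_gen; auto.
  - intros z w Hz Hw. apply phi_hdist; auto.
Qed.


Lemma good_geo f u v z : good f ->
  (forall x y, nrm2 x <= 1 -> nrm2 y <= 1 -> f x = f y -> x = y) ->
  on_S1 u -> on_S1 v -> u <> v -> in_disk z ->
  (geo u v z <-> geo (f u) (f v) (f z)).
Proof.
  intros Hf Hinj Hu Hv Hne Hz.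
  assert (Hu1 : nrm2 u <= 1) by (unfold on_S1 in Hu; lra).
  assert (Hv1 : nrm2 v <= 1) by (unfold on_S1 in Hv; lra).
  assert (Hz1 : nrm2 z <= 1) by (unfold in_disk in Hz; lra).
  destruct (g_gen f Hf _ _ (geo_nondeg u v Hu Hv Hne)) as [A' [c' [Hn' H']]].
  assert (Hfu : on_S1 (f u)) by (apply good_S1; auto).
  assert (Hfv : on_S1 (f v)) by (apply good_S1; auto).
  assert (Hfne : f u <> f v) by (intro E; apply Hne; apply Hinj; auto).
  pose proof (gen_boundary A' c' (f u) (f v) Hn' Hfu Hfv Hfne) as GB.
  unfold geo at 1. rewrite H' by auto. apply GB.
  - apply H'; auto. apply geo_u; auto.
  - apply H'; auto. apply geo_v; auto.
Qed.

Lemma card_transport {T} (S1 S2 : T -> Prop) (Phi : T -> T) n :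
  (forall Y, S2 Y -> S1 (Phi Y)) ->
  (forall X, S1 X -> exists Y, S2 Y /\ X = Phi Y) ->
  (forall Y Y', S2 Y -> S2 Y' -> Phi Y = Phi Y' -> Y = Y') ->
  has_card S2 n -> has_card S1 n.
Proof.
  intros H1 H2 H3 [f [Hi Hm]]. exists (fun i => Phi (f i)). split.
  - intros i j Hin Hjn E. apply Hi; auto. apply H3; auto.
    + apply Hm. exists i; auto.
    + apply Hm. exists j; auto.
  - intro X. split.
    + intro HX. destruct (H2 X HX) as [Y [HY EX]]. apply Hm in HY.
      destruct HY as [i [Hin Ei]]. exists i. split; auto. subst; auto.
    + intros [i [Hin Ei]]. subst. apply H1. apply Hm. exists i; auto.
Qed.

Definition img (f : pt -> pt) (X : pt -> Prop) : pt -> Prop := fun y => exists z, X z /\ y = f z.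

Lemma img3 f a b c : img f (fun z => z = a \/ z = b \/ z = c) =
  (fun y => y = f a \/ y = f b \/ y = f c).
Proof.
  apply functional_extensionality. intro y. apply propositional_extensionality.
  unfold img. split.
  - intros [z [Hz Ey]]. subst. destruct Hz as [E|[E|E]]; subst; auto.
  - intros [E|[E|E]]; subst; eauto.
Qed.

Lemma circ_transport f fi P Q R0 n : good f -> good fi ->
  (forall z, nrm2 z <= 1 -> fi (f z) = z) ->
  (forall w, nrm2 w <= 1 -> f (fi w) = w) ->
  in_disk P -> in_disk Q -> in_disk R0 ->
  has_card (circG (f P) (f Q) (f R0)) n -> has_card (circG P Q R0) n.
Proof.
  intros Hf Hfi Hl Hr HP HQ HR.
  assert (Injf : forall x y, nrm2 x <= 1 -> nrm2 y <= 1 -> f x = f y -> x = y).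
  { intros x y Hx Hy E. rewrite <- (Hl x Hx), <- (Hl y Hy), E. auto. }
  assert (Injfi : forall x y, nrm2 x <= 1 -> nrm2 y <= 1 -> fi x = fi y -> x = y).
  { intros x y Hx Hy E. rewrite <- (Hr x Hx), <- (Hr y Hy), E. auto. }
  assert (S1le : forall x, on_S1 x -> nrm2 x <= 1) by (unfold on_S1; intros; lra).
  assert (Dle : forall x, in_disk x -> nrm2 x <= 1) by (unfold in_disk; intros; lra).
  apply (card_transport _ _ (img fi)).
  - intros Y [a [b [c [Ha [Hb [Hc [Hab [Hbc [Hca [HY [G1 [G2 G3]]]]]]]]]]]].
    subst Y. rewrite img3.
    exists (fi a), (fi b), (fi c).
    assert (Fa : on_S1 (fi a)) by (apply good_S1; auto).
    assert (Fb : on_S1 (fi b)) by (apply good_S1; auto).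
    assert (Fc : on_S1 (fi c)) by (apply good_S1; auto).
    repeat split; auto.
    + assert (Ne : fi b <> fi c) by (intro E; apply Hbc; rewrite <- (Hr b), <- (Hr c), E; auto).
      apply (proj2 (good_geo f (fi b) (fi c) P Hf Injf Fb Fc Ne HP)).
      rewrite Hr, Hr; auto.
    + assert (Ne : fi c <> fi a) by (intro E; apply Hca; rewrite <- (Hr c), <- (Hr a), E; auto).
      apply (proj2 (good_geo f (fi c) (fi a) Q Hf Injf Fc Fa Ne HQ)).
      rewrite Hr, Hr; auto.
    + assert (Ne : fi a <> fi b) by (intro E; apply Hab; rewrite <- (Hr a), <- (Hr b), E; auto).
      apply (proj2 (good_geo f (fi a) (fi b) R0 Hf Injf Fa Fb Ne HR)).
      rewrite Hr, Hr; auto.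
  - intros X [a [b [c [Ha [Hb [Hc [Hab [Hbc [Hca [HX [G1 [G2 G3]]]]]]]]]]]].
    exists (fun y => y = f a \/ y = f b \/ y = f c). split.
    + exists (f a), (f b), (f c).
      repeat split; try (apply good_S1; auto).
      * intro E; apply Hab, Injf; auto.
      * intro E; apply Hbc, Injf; auto.
      * intro E; apply Hca, Injf; auto.
      * apply good_geo; auto.
      * apply good_geo; auto.
      * apply good_geo; auto.
    + rewrite <- img3. subst X. rewrite img3, img3. rewrite !Hl; auto.
  - intros Y Y' HY HY' E.
    destruct HY as [a [b [c [Ha [Hb [Hc [_ [_ [_ [HY _]]]]]]]]]].
    destruct HY' as [a' [b' [c' [Ha' [Hb' [Hc' [_ [_ [_ [HY' _]]]]]]]]]].
    subst Y Y'. rewrite !img3 in E.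
    assert (E2 : img f (fun y => y = fi a \/ y = fi b \/ y = fi c) =
                 img f (fun y => y = fi a' \/ y = fi b' \/ y = fi c')) by (rewrite E; auto).
    rewrite !img3 in E2. rewrite !Hr in E2; auto.
Qed.

Lemma negneg (a : pt) : (- fst (- fst a, - snd a), - snd (- fst a, - snd a)) = a.
Proof. apply pt_eq; simpl; ring. Qed.

Lemma phi_inv' a z : in_disk a -> nrm2 z <= 1 -> phi a (phi (- fst a, - snd a) z) = z.
Proof.
  intros Ha Hz. rewrite <- (negneg a) at 1. apply phi_inv; auto.
  unfold in_disk, nrm2, dot in *; simpl; lra.
Qed.

Lemma det_zero_perp (n1 n2 x : pt) : dot n1 n2 = 0 -> dot n2 x = 0 -> nrm2 n2 > 0 -> det2 n1 x = 0.
Proof.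
  unfold nrm2, dot, det2. destruct n1 as [a1 a2], n2 as [b1 b2], x as [x1 x2]; simpl.
  intros H1 H2 H3.
  assert (E1 : b1 * (a1 * x2 - a2 * x1) = 0).
  { apply (lc2 _ _ _ _ _ _ x2 (- a2) H1 H2). ring. }
  assert (E2 : b2 * (a1 * x2 - a2 * x1) = 0).
  { apply (lc2 _ _ _ _ _ _ (- x1) a1 H1 H2). ring. }
  destruct (Req_dec b1 0) as [Z1|Z1].
  - destruct (Req_dec b2 0) as [Z2|Z2].
    + rewrite Z1, Z2 in H3. lra.
    + apply Rmult_integral in E2. destruct E2; [contradiction|auto].
  - apply Rmult_integral in E1. destruct E1; [contradiction|auto].
Qed.

Theorem theorem2p1 (P Q R0 : pt) (LPQ LRF : hline) (F : pt) (h : R) :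
  in_disk P -> in_disk Q -> in_disk R0 ->
  ~ (exists L, hl_ok L /\ on_hl L P /\ on_hl L Q /\ on_hl L R0) ->
  hl_ok LPQ -> on_hl LPQ P -> on_hl LPQ Q ->
  hl_ok LRF -> on_hl LRF R0 -> orth_at LPQ LRF F ->
  h = hdist R0 F ->
  (h < hDelta P Q -> has_card (circumscribing P Q R0) 0) /\
  (h = hDelta P Q -> has_card (circumscribing P Q R0) 1) /\
  (hDelta P Q < h -> has_card (circumscribing P Q R0) 2).
Proof.
  intros HP HQ HR Hnc Hok1 HonP HonQ Hok2 HonR Horth Hh.
  destruct Horth as [HonF1 [HonF2 Hdot]].
  assert (HF : in_disk F) by (destruct HonF1; auto).
  destruct (gen_of_hl LPQ Hok1) as [N1 E1].
  destruct (gen_of_hl LRF Hok2) as [N2 E2].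
  set (A1 := gA LPQ) in *. set (c1 := gc LPQ) in *.
  set (A2 := gA LRF) in *. set (c2 := gc LRF) in *.
  assert (G1P : gen A1 c1 P) by (apply E1; destruct HonP; auto).
  assert (G1Q : gen A1 c1 Q) by (apply E1; destruct HonQ; auto).
  assert (G1F : gen A1 c1 F) by (apply E1; destruct HonF1; auto).
  assert (G2R : gen A2 c2 R0) by (apply E2; destruct HonR; auto).
  assert (G2F : gen A2 c2 F) by (apply E2; destruct HonF2; auto).
  apply normal_gen in Hdot. fold A1 c1 A2 c2 in Hdot.
  set (n1 := nvec A1 c1 F) in *. set (n2 := nvec A2 c2 F) in *.
  set (kF := 1 - nrm2 F).
  assert (HkF : 0 < kF) by (unfold kF; unfold in_disk in HF; lra).
  assert (Dle : forall x, in_disk x -> nrm2 x <= 1) by (unfold in_disk; intros; lra).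
  assert (Tn : forall A c n, nondeg A c -> gen A c F -> n = nvec A c F ->
            0 < nrm2 n /\ forall z, nrm2 z <= 1 -> (gen A c z <-> dot n (phi F z) = 0)).
  { intros A c n Hn HgF En.
    pose proof (phi_nondeg F A c HF Hn) as Hn'.
    rewrite (genA_at F A c HgF), (genC_at F A c HgF) in Hn'. rewrite <- En in Hn'.
    split.
    - unfold nondeg in Hn'. fold kF in Hn'.
      assert (E : nrm2 (- kF * fst n, - kF * snd n) = (kF * kF) * nrm2 n)
        by (unfold nrm2, dot; simpl; ring).
      rewrite E in Hn'.
      apply (Rmult_lt_reg_l (kF * kF)); [nra|]. lra.
    - intros z Hz. rewrite (phi_gen F A c z HF Hz).
      rewrite (genA_at F A c HgF), (genC_at F A c HgF). rewrite <- En.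
      unfold gen. unfold dot at 1 2. cbn [fst snd]. fold kF.
      split; intro H.
      + assert (kF * (fst n * fst (phi F z) + snd n * snd (phi F z)) = 0) by lra.
        apply Rmult_integral in H0. destruct H0; [lra|]. unfold dot; auto.
      + unfold dot in H. replace (- kF * fst n * fst (phi F z) + - kF * snd n * snd (phi F z))
          with (- kF * (fst n * fst (phi F z) + snd n * snd (phi F z))) by ring.
        rewrite H. ring. }
  destruct (Tn A1 c1 n1 N1 G1F eq_refl) as [Pn1 T1].
  destruct (Tn A2 c2 n2 N2 G2F eq_refl) as [Pn2 T2].
  assert (DP : dot n1 (phi F P) = 0) by (apply T1; auto).
  assert (DQ : dot n1 (phi F Q) = 0) by (apply T1; auto).
  assert (DR : dot n2 (phi F R0) = 0) by (apply T2; auto).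
  set (l := sqrt (nrm2 n1)).
  assert (Hl : 0 < l) by (apply sqrt_lt_R0; auto).
  assert (Hl2 : l * l = nrm2 n1) by (apply sqrt_sqrt; lra).
  set (e := (- snd n1 / l, fst n1 / l)).
  assert (He : on_S1 e).
  { unfold on_S1, e. unfold nrm2 at 1. unfold dot at 1. cbn [fst snd].
    replace (- snd n1 / l * (- snd n1 / l) + fst n1 / l * (fst n1 / l)) with (nrm2 n1 / (l * l))
      by (unfold nrm2, dot; field; lra).
    rewrite <- Hl2. field. lra. }
  assert (HF' : in_disk (- fst F, - snd F)) by (unfold in_disk, nrm2, dot in *; simpl; lra).
  set (T := fun z => rot e (phi F z)).
  set (Ti := fun w => phi (- fst F, - snd F) (rot (cconj e) w)).
  assert (gT : good T) by (apply (good_comp (phi F) (rot e)); [apply phi_good | apply rot_good]; auto).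
  assert (gTi : good Ti).
  { apply (good_comp (rot (cconj e)) (phi (- fst F, - snd F))).
    - apply rot_good, cconj_S1; auto.
    - apply phi_good; auto. }
  assert (LI : forall z, nrm2 z <= 1 -> Ti (T z) = z).
  { intros z Hz. unfold T, Ti. rewrite rot_inv by auto. apply phi_inv; auto. }
  assert (RI : forall w, nrm2 w <= 1 -> T (Ti w) = w).
  { intros w Hw. unfold T, Ti. rewrite phi_inv'; auto.
    - rewrite <- (cconj_inv e) at 1. apply rot_inv. apply cconj_S1; auto.
    - rewrite rot_nrm; auto. apply cconj_S1; auto. }
  assert (Hdet : forall x, det2 e x = - dot n1 x / l).
  { intro x. unfold e, det2, dot. simpl. field. lra. }
  assert (Hdot2 : forall x, dot e x = det2 n1 x / l).
  { intro x. unfold e, det2, dot. simpl. field. lra. }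
  set (p := fst (T P)). set (q := fst (T Q)). set (s := snd (T R0)).
  assert (TPe : T P = (p, 0)).
  { apply pt_eq; auto. unfold T, rot. cbn [fst snd]. rewrite Hdet, DP. unfold Rdiv. ring. }
  assert (TQe : T Q = (q, 0)).
  { apply pt_eq; auto. unfold T, rot. cbn [fst snd]. rewrite Hdet, DQ. unfold Rdiv. ring. }
  assert (TRe : T R0 = (0, s)).
  { apply pt_eq; auto. unfold T, rot. cbn [fst snd]. rewrite Hdot2.
    rewrite (det_zero_perp n1 n2 (phi F R0)); auto. unfold Rdiv. ring. }
  assert (TFe : T F = (0, 0)).
  { unfold T. rewrite phi_aa. unfold rot, dot, det2. apply pt_eq; simpl; ring. }
  assert (Hp : -1 < p < 1).
  { assert (H : in_disk (T P)) by (apply good_disk; auto). rewrite TPe in H.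
    unfold in_disk, nrm2, dot in H. simpl in H. split; nra. }
  assert (Hq : -1 < q < 1).
  { assert (H : in_disk (T Q)) by (apply good_disk; auto). rewrite TQe in H.
    unfold in_disk, nrm2, dot in H. simpl in H. split; nra. }
  assert (Hs : -1 < s < 1).
  { assert (H : in_disk (T R0)) by (apply good_disk; auto). rewrite TRe in H.
    unfold in_disk, nrm2, dot in H. simpl in H. split; nra. }
  assert (Hs0 : s <> 0).
  { intro Z. apply Hnc. exists LPQ. split; [auto|]. split; [auto|]. split; [auto|].
    assert (E : R0 = F).
    { rewrite <- (LI R0), <- (LI F) by auto. f_equal. rewrite TRe, TFe, Z. auto. }
    rewrite E. auto. }
  assert (Hpq : p <> q).
  { intro Epq. apply Hnc.
    set (A := 2 * p * s). set (c := (s * (p * p + 1), p * (s * s + 1))).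
    assert (Nd : nondeg A c).
    { unfold nondeg, A, c, nrm2, dot. simpl.
      assert (H1 : 0 < s * s) by (apply Rsqr_pos_lt; auto).
      assert (H2 : 0 < 1 - p * p) by nra.
      assert (H3 : 0 < s * s * ((1 - p * p) * (1 - p * p))) by (apply Rmult_lt_0_compat; nra).
      assert (H4 : 0 <= p * (s * s + 1) * (p * (s * s + 1))) by (apply Rle_0_sqr).
      assert (E : s * (p * p + 1) * (s * (p * p + 1)) - 2 * p * s * (2 * p * s) =
                  s * s * ((1 - p * p) * (1 - p * p))) by ring.
      lra. }
    destruct (g_gen Ti gTi A c Nd) as [A' [c' [Nd' HG]]].
    assert (GP : gen A' c' P).
    { rewrite <- (LI P) by auto. rewrite TPe. apply HG.
      - unfold nrm2, dot; simpl; nra.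
      - unfold gen, A, c, nrm2, dot. simpl. ring. }
    assert (GQ : gen A' c' Q).
    { rewrite <- (LI Q) by auto. rewrite TQe, <- Epq. apply HG.
      - unfold nrm2, dot; simpl; nra.
      - unfold gen, A, c, nrm2, dot. simpl. ring. }
    assert (GR : gen A' c' R0).
    { rewrite <- (LI R0) by auto. rewrite TRe. apply HG.
      - unfold nrm2, dot; simpl; nra.
      - unfold gen, A, c, nrm2, dot. simpl. ring. }
    destruct (hl_of_gen A' c' Nd') as [L [HL HLe]].
    exists L. repeat split; auto; apply HLe; auto. }
  assert (Hh' : h = hdist (0, s) (0, 0)).
  { rewrite Hh, <- TRe, <- TFe. symmetry. apply g_dist; auto. }
  assert (HD : hDelta P Q = hDelta (p, 0) (q, 0)).
  { unfold hDelta. rewrite <- TPe, <- TQe. rewrite (g_dist T gT); auto. }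
  rewrite HD.
  destruct (norm_main p q s h Hp Hq Hs Hpq Hh') as [C0 [C1 C2]].
  assert (Tr : forall n, has_card (circumscribing (p, 0) (q, 0) (0, s)) n ->
                 has_card (circumscribing P Q R0) n).
  { intros n Hc. apply (has_card_ext _ _ _ (fun X => circ_G P Q R0 X HP HQ HR)).
    apply (circ_transport T Ti P Q R0 n gT gTi LI RI HP HQ HR).
    rewrite TPe, TQe, TRe.
    assert (DP' : in_disk (p, 0)) by (unfold in_disk, nrm2, dot; simpl; nra).
    assert (DQ' : in_disk (q, 0)) by (unfold in_disk, nrm2, dot; simpl; nra).
    assert (DR' : in_disk (0, s)) by (unfold in_disk, nrm2, dot; simpl; nra).
    apply (has_card_ext _ _ _ (fun X => iff_sym (circ_G _ _ _ X DP' DQ' DR'))). auto. }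
  split; [|split]; intro H; apply Tr; auto.
Qed.
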